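(* Let $X$ be an extensible marked Dynkin diagram with $d$ nodes and let $n\ge d$ be such that $\det(X_n)\ne0$. Then $P(X_n)/Q(X_n)$ is a cyclic group generated by the class $[\overline{\omega}_1^{(n)}]$ of $\overline{\omega}_1^{(n)}=\omega_n^{(n)}$.
   Context: A marked Dynkin diagram $X$ has nodes $1,\dots,d$ with node $d$ distinguished and symmetrizable generalized Cartan matrix $C(X)$. For $n\ge d$, $X_n$ is obtained by attaching a simply-laced chain of new nodes $d+1,\dots,n$ to node $d$ (so $C(X_n)$ has $C(X)$ as upper-left block, $2$ on the remaining diagonal, $-1$ in positions $(i,i+1),(i+1,i)$ for $d\le i<n$, $0$ elsewhere). $\det(Y)$ is the determinant of the generalized Cartan matrix of $Y$. The sequence $\det(X_n)$, $n\ge d$, is arithmetic with common difference $\Delta$; $X$ is extensible if $\Delta\ne0$, $\det(X)\ne0$ and $\gcd(\Delta,\det X)=1$. For the Kac–Moody algebra $\mathfrak g(X_n)$: simple roots $\alpha_i^{(n)}$, simple coroots $\check\alpha_i^{(n)}$ with $\alpha_j^{(n)}(\check\alpha_i^{(n)})=C(X_n)_{ij}$; root lattice $Q(X_n)=\bigoplus_i\mathbb Z\alpha_i^{(n)}$; weight lattice $P(X_n)=\{\lambda\in\mathfrak h^*(X_n):\lambda(\check\alpha_i^{(n)})\in\mathbb Z\ \forall i\}$; fundamental weights $\omega_i^{(n)}$ with $\omega_i^{(n)}(\check\alpha_j^{(n)})=\delta_{ij}$. *)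

(* Defs.v *)
From HB Require Import structures.
From mathcomp Require Import all_boot all_order all_algebra all_field.
Set Implicit Arguments. Unset Strict Implicit. Unset Printing Implicit Defensive.
Import Order.TTheory GRing.Theory Num.Theory.
Local Open Scope ring_scope.

(* A marked Dynkin diagram X with d nodes (0-indexed 0..d-1 here, node d of the
   paper = index d-1) is given by its d x d integer matrix C = C(X). *)

Definition is_gcm (d : nat) (C : 'M[int]_d) : Prop :=
  forall i j : 'I_d,
    (i = j -> C i j = 2) /\
    (i <> j -> C i j <= 0) /\
    (C i j = 0 <-> C j i = 0).

Definition symmetrizable (d : nat) (C : 'M[int]_d) : Prop :=
  exists D : 'I_d -> rat, (forall i, 0 < D i) /\
    forall i j : 'I_d, D i * (C i j)%:~R = D j * (C j i)%:~R.

Definition Cnat (d : nat) (C : 'M[int]_d) (i j : nat) : int :=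
  match @insub _ (fun k => k < d)%N _ i, @insub _ (fun k => k < d)%N _ j with
  | Some i', Some j' => C i' j'
  | _, _ => 0
  end.

(* C(X_n): C as upper-left block, then a simply-laced chain attached to the
   distinguished node (0-indexed d-1) with new nodes d, ..., n-1 (0-indexed). *)
Definition CX (d : nat) (C : 'M[int]_d) (n : nat) : 'M[int]_n :=
  \matrix_(i < n, j < n)
    if ((i < d) && (j < d))%N then Cnat C i j
    else if i == j then 2
    else if (((i.+1 == j) || (j.+1 == i)) && (d.-1 <= minn i j))%N then -1
    else 0.

(* common difference of the arithmetic sequence det(X_n), n >= d *)
Definition Delta (d : nat) (C : 'M[int]_d) : int :=
  \det (CX C d.+1) - \det (CX C d).

Definition extensible (d : nat) (C : 'M[int]_d) : Prop :=
  Delta C != 0 /\ \det C != 0 /\ coprimez (Delta C) (\det C).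

(* Realization of g(X_n) when det C(X_n) <> 0: the simple coroots form a basis
   of h, so an element lambda of h^* is determined by (and identified with)
   the row vector of its values lambda(coroot_i), i < n. *)
Definition hstar (n : nat) := 'rV[algC]_n.

Definition pairing (n : nat) (lam : hstar n) (i : 'I_n) : algC := lam 0 i.

Definition simple_root (d : nat) (C : 'M[int]_d) (n : nat) (j : 'I_n) : hstar n :=
  \row_(i < n) ((CX C n i j)%:~R : algC).

(* fundamental weight omega_k^{(n)}, k 1-indexed as in the paper *)
Definition fund_weight (n k : nat) : hstar n :=
  \row_(j < n) ((j.+1 == k)%:R : algC).

Definition in_weight_lattice (n : nat) (lam : hstar n) : Prop :=
  forall i : 'I_n, exists z : int, pairing lam i = z%:~R.

Definition in_root_lattice (d : nat) (C : 'M[int]_d) (n : nat) (lam : hstar n) : Prop :=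
  exists c : 'I_n -> int, lam = \sum_(j < n) (simple_root C j) *~ c j.

(* Main.v *)
Require Import Defs.
From HB Require Import structures.
From mathcomp Require Import all_boot all_order all_algebra all_field.
From mathcomp Require Import zify ring.
Import Order.TTheory GRing.Theory Num.Theory.
Local Open Scope ring_scope.
Set Implicit Arguments. Unset Strict Implicit.

Section S.
Variables (d : nat) (C : 'M[int]_d).

Definition cxn (i j : nat) : int :=
    if ((i < d) && (j < d))%N then Cnat C i j
    else if i == j then 2
    else if (((i.+1 == j) || (j.+1 == i)) && (d.-1 <= minn i j))%N then -1
    else 0.

Lemma CXE n (i j : 'I_n) : CX C n i j = cxn i j.
Proof. by rewrite mxE. Qed.

Lemma Cnat_ord (i j : 'I_d) : Cnat C i j = C i j.
Proof.
rewrite /Cnat (insubT (fun k => k < d)%N (ltn_ord i)) (insubT (fun k => k < d)%N (ltn_ord j)).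
by congr (C _ _); apply: val_inj.
Qed.

Lemma CX_d : CX C d = C.
Proof. by apply/matrixP => i j; rewrite CXE /cxn !ltn_ord Cnat_ord. Qed.

Lemma cxn_out i j : (d <= i)%N ->
  cxn i j = if i == j then 2 else if ((i.+1 == j) || (j.+1 == i))%N then -1 else 0.
Proof.
move=> hi; rewrite /cxn; have -> : (i < d)%N = false by lia.
case: eqP => // _; case: orP => // H.
have -> // : (d.-1 <= minn i j)%N by case: H => /eqP; lia.
Qed.

Lemma cxn_outr i j : (d <= j)%N ->
  cxn i j = if i == j then 2 else if ((i.+1 == j) || (j.+1 == i))%N then -1 else 0.
Proof.
move=> hi; rewrite /cxn; have -> : (j < d)%N = false by lia.
rewrite andbF; case: eqP => // _; case: orP => // H.
have -> // : (d.-1 <= minn i j)%N by case: H => /eqP; lia.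
Qed.

Lemma CX_block m : row' ord_max (col' ord_max (CX C m.+1)) = CX C m.
Proof. by apply/matrixP => i j; rewrite [LHS]mxE [LHS]mxE !CXE !lift_max. Qed.

Lemma sgn_even k : (-1) ^+ (k + k) = 1 :> int.
Proof. by rewrite -signr_odd addnn odd_double. Qed.
Lemma sgn_odd k : (-1) ^+ (k.+1 + k) = -1 :> int.
Proof. by rewrite -signr_odd addSn /= addnn odd_double. Qed.

Lemma det_rec m : (0 < d)%N -> (d <= m.+1)%N ->
  \det (CX C m.+2) = 2 * \det (CX C m.+1) - \det (CX C m).
Proof.
move=> hd hm.
rewrite (expand_det_row _ ord_max) big_ord_recr big_ord_recr /=.
rewrite big1 ?add0r; last first.
  move=> j _; have := ltn_ord j; rewrite CXE cxn_out /=; last lia; move=> hj.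
  have -> : (m.+1 == widen_ord (leqnSn m.+1) (widen_ord (leqnSn m) j)) = false by apply/eqP => /= ; lia.
  have -> : ((m.+2 == widen_ord (leqnSn m.+1) (widen_ord (leqnSn m) j)) || ((widen_ord (leqnSn m.+1) (widen_ord (leqnSn m) j)).+1 == m.+1)) = false.
    by apply/negbTE; rewrite negb_or; apply/andP; split; apply/eqP => /=; lia.
  by rewrite mul0r.
rewrite !CXE !cxn_out //= !eqxx orbT.
have -> : (m.+1 == m) = false by lia.
rewrite /cofactor /= sgn_even mul1r CX_block sgn_odd.
set N := row' _ _.
rewrite (expand_det_col N ord_max) big_ord_recr /= big1 ?add0r; last first.
  move=> i _; have := ltn_ord i => hi.
  rewrite /N mxE mxE CXE cxn_outr /= /bump /=; last lia.
  have -> : (m < i)%N = false by lia.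
  rewrite leqnn /= add0n add1n.
  have -> : ((i:nat) == m.+1) = false by lia.
  have -> : (i.+1 == m.+1) = false by lia.
  have -> : (m.+2 == (i:nat)) = false by lia.
  by rewrite mul0r.
rewrite /cofactor /= sgn_even mul1r.

have -> : row' ord_max (col' ord_max N) = CX C m.
  apply/matrixP => i j; have := ltn_ord j => hj.
  rewrite [LHS]mxE [LHS]mxE /N [LHS]mxE [LHS]mxE !CXE /= /bump /=.
  have := ltn_ord i => hi.
  have -> : (m <= j)%N = false by lia.
  have -> : (m <= i)%N = false by lia.
  rewrite /= !add0n; have -> : (m < i)%N = false by lia.
  by have -> : (m <= j)%N = false by lia.
rewrite /N mxE mxE CXE cxn_outr /= /bump /=; last lia.
rewrite ltnn leqnn add0n add1n eqxx orTb.
have -> : (m == m.+1) = false by lia.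
by rewrite !mulN1r opprK addrC.
Qed.

Lemma diff_const k : (0 < d)%N ->
  \det (CX C (d.-1 + k).+1) - \det (CX C (d.-1 + k)) = Delta C.
Proof.
move=> hd; rewrite /Delta.
have hdd : d = (d.-1).+1 by rewrite prednK.
elim: k => [|k IH].
  rewrite addn0 -hdd.
  have := det_rec (m := d.-1) hd; rewrite -hdd => ->; last by [].
  ring.
rewrite addnS det_rec //; last lia.
rewrite -IH; ring.
Qed.

Lemma f_form k : (0 < d)%N ->
  \det (CX C (d.-1 + k)) = \det C + (k%:Z - 1) * Delta C.
Proof.
move=> hd; elim: k => [|k IH].
  have := diff_const 0 hd; rewrite addn0 prednK // CX_d => <-; ring.
have := diff_const k hd; rewrite addnS => E.
have -> : \det (CX C (d.-1 + k).+1) = \det (CX C (d.-1 + k)) + Delta C by rewrite -E; ring.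
rewrite IH -addn1 PoszD; ring.
Qed.

Lemma bezout_n m : (0 < d)%N -> (d <= m.+1)%N -> extensible C ->
  exists a b : int, a * \det (CX C m.+1) + b * \det (CX C m) = 1.
Proof.
move=> hd hm [_ [_ /coprimezP [[u v] /= Huv]]].
have hk : m = (d.-1 + (m - d.-1))%N by lia.
have Ef := f_form (m - d.-1)%N hd; rewrite -hk in Ef.
have En : \det (CX C m.+1) = \det (CX C m) + Delta C.
  have := diff_const (m - d.-1)%N hd; rewrite -hk => <-; ring.
set t := (((m - d.-1)%N)%:Z - 1) in Ef.
exists (u - v * t); exists (v - u + v * t).
rewrite -Huv En Ef; ring.
Qed.

End S.

Section Gen.
Variable n' : nat.
Local Notation n := n'.+1.

Definition ecol : 'cV[int]_n := \col_i (i == ord_max)%:R.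

Lemma gen (M : 'M[int]_n) (a b : int) :
  a * \det M + b * \det (row' ord_max (col' ord_max M)) = 1 ->
  forall v : 'cV[int]_n, exists k : int, exists c : 'cV[int]_n,
    v - k *: ecol = M *m c.
Proof.
move=> hab v.
pose B : 'M[int]_n := \matrix_(i, j) if j == ord_max then (i == ord_max)%:R else M i j.
have hB : \det B = \det (row' ord_max (col' ord_max M)).
  rewrite (expand_det_col B ord_max) big_ord_recr /= big1 ?add0r; last first.
    move=> i _; rewrite /B mxE eqxx.
    have -> : (widen_ord (leqnSn n') i == ord_max) = false.
      by apply/negbTE; rewrite neq_ltn /= ltn_ord.
    by rewrite mul0r.
  rewrite /B mxE !eqxx mul1r /cofactor.
  rewrite -signr_odd addnn odd_double expr0 mul1r.
  congr (\det _); apply/matrixP => i j; rewrite !mxE.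
  have -> // : (lift ord_max j == ord_max :> 'I_n) = false.
  apply/negbTE/eqP => /(congr1 val) /=; rewrite /bump; have := ltn_ord j; lia.
pose w := \adj B *m v.
pose w' : 'cV[int]_n := \col_j (if j == ord_max then 0 else w j 0).
have hw : B *m w = M *m w' + w ord_max 0 *: ecol.
  apply/colP => i; rewrite !mxE big_ord_recr [in RHS]big_ord_recr /= !mxE !eqxx mulr0 addr0.
  congr (_ + _); last by rewrite mulrC.
  apply: eq_bigr => j _; rewrite !mxE.
  have -> // : (widen_ord (leqnSn n') j == ord_max) = false.
  by apply/negbTE; rewrite neq_ltn /= ltn_ord.
exists (b * w ord_max 0); exists (a *: (\adj M *m v) + b *: w').
rewrite mulmxDr -!scalemxAr mulmxA mul_mx_adj mul_scalar_mx.
have -> : M *m w' = B *m w - w ord_max 0 *: ecol by rewrite hw addrK.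
rewrite /w mulmxA mul_mx_adj mul_scalar_mx hB.
rewrite scalerBr !scalerA -scalerA -[X in X - _ = _]scale1r -hab scalerDl.
by rewrite addrA.
Qed.
End Gen.

Lemma mxzE (R : zmodType) m n (A : 'M[R]_(m,n)) (z : int) i j : (A *~ z) i j = A i j *~ z.
Proof. by case: z => k; rewrite /intmul ?mxE mulmxnE. Qed.

Unset Implicit Arguments.
Theorem lemma3p1 (d : nat) (C : 'M[int]_d) (hd : (0 < d)%N)
    (hgcm : is_gcm C) (hsym : symmetrizable C) (hext : extensible C)
    (n : nat) (hn : (d <= n)%N) (hdet : \det (CX C n) != 0) :
  (forall lam : hstar n, in_root_lattice C lam -> in_weight_lattice lam) /\
  in_weight_lattice (fund_weight n n) /\
  (forall lam : hstar n, in_weight_lattice lam ->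
     exists k : int, in_root_lattice C (lam - (fund_weight n n) *~ k)).
Proof.
split.
  move=> lam [c ->] i.
  exists (\sum_j CX C n i j * c j).
  rewrite /pairing summxE rmorph_sum; apply: eq_bigr => j _.
  by rewrite /simple_root mxzE mxE rmorphM /= mulrzr.
split.
  by move=> i; exists (Posz (i.+1 == n)); rewrite /pairing /fund_weight mxE.
case: n hn hdet => [|n'] hn hdet; first by lia.
move=> lam hlam.
have [a [b hab]] := bezout_n hd hn hext.
rewrite -(CX_block C n') in hab.
have hl i : exists z : int, pairing lam i == z%:~R.
  by have [z hz] := hlam i; exists z; apply/eqP.
pose v : 'cV[int]_n'.+1 := \col_i xchoose (hl i).
have hv i : lam 0 i = (v i 0)%:~R by rewrite mxE; apply/eqP; exact: (xchooseP (hl i)).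
have [k [c hc]] := gen hab v.
exists k; exists (fun j => c j 0).
apply/rowP => i.
have := congr1 (fun A : 'M[int]_(n'.+1,1) => A i 0) hc; rewrite /= !mxE => E.
rewrite summxE hv mxzE /fund_weight mxE.
have -> : \sum_j (simple_root C j *~ c j 0) 0 i = ((\sum_j CX C n'.+1 i j * c j 0)%:~R : algC).
  by rewrite rmorph_sum; apply: eq_bigr => j _; rewrite /simple_root mxzE mxE rmorphM /= mulrzr.
rewrite -E mxE rmorphB rmorphM /=.
have -> : (i.+1 == n'.+1) = (i == ord_max) by [].
case: (i == ord_max) => /=.
  by rewrite mulr1.
by rewrite mul0rz mulr0z mulr0.
Qed.
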